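(* Let $t,c,k\in\mathbb{N}$, let $G$ be a strongly $t$-boundaried graph, and let $H$ and $H'$ be $t$-boundaried graphs that are $c$-equivalent. Then $G\oplus H$ has a vertex cover of size at most $k$ if and only if $G\oplus H'$ has a vertex cover of size at most $k-c$.
   Context: Graphs are finite, simple, undirected. A graph $G$ is $t$-boundaried if $t$ of its non-isolated vertices $x_1,\dots,x_t$ (the boundary) are bijectively labeled with $1,\dots,t$; it is strongly $t$-boundaried if moreover $\{x_1,\dots,x_t\}$ is an independent set in $G$. For a strongly $t$-boundaried $G$ and a $t$-boundaried $H$, $G\oplus H$ (gluing) is obtained from the disjoint union of $G$ and $H$ by identifying the boundary vertices with the same label. A vertex set $S$ of $G\oplus H$ is compatible with $X\subseteq\{1,\dots,t\}$ in $G$ if for all $i$: $N_G(x_i)\subseteq S \iff i\in X$, where $N_G$ is the neighborhood in $G$. The profile $P^G_H:2^{\{1,\dots,t\}}\to\mathbb{N}\cup\{\infty\}$ assigns to $X$ the minimum of $|S\cap V(H)|$ over all vertex covers $S$ of $G\oplus H$ compatible with $X$ in $G$ ($\infty$ if none exists). Two $t$-boundaried graphs $H,H'$ are $c$-equivalent if $P^{G}_H(X)=P^{G}_{H'}(X)+c$ for every strongly $t$-boundaried graph $G$ and every $X\subseteq\{1,\dots,t\}$ (with $\infty+c=\infty$). *)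

(* Defs.v *)
From HB Require Import structures.
From mathcomp Require Import all_boot all_order all_algebra.
Set Implicit Arguments. Unset Strict Implicit. Unset Printing Implicit Defensive.

Record sgraph := SGraph {
  vert : finType;
  adj : rel vert;
  adj_sym : symmetric adj;
  adj_irr : irreflexive adj }.

(* A t-boundaried graph: t distinct non-isolated vertices labeled 1..t
   (here labels are 'I_t = {0,..,t-1}). *)
Record bgraph (t : nat) := BGraph {
  bg :> sgraph;
  bnd : 'I_t -> vert bg;
  bnd_inj : injective bnd;
  bnd_nonisol : forall i, exists v, adj (bnd i) v }.

Definition strongly t (G : bgraph t) : Prop :=
  forall i j : 'I_t, ~~ adj (bnd G i) (bnd G j).

Section Glue.
Variables (t : nat) (G H : bgraph t).

Definition glued : finType :=
  (vert G + {v : vert H | v \notin codom (bnd H)})%type.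

Definition glueG (x : vert G) : glued := inl x.

(* embedding of V(H) into V(G (+) H): boundary vertex x_i of H is identified
   with boundary vertex x_i of G *)
Definition glueH (v : vert H) : glued :=
  (if v \in codom (bnd H) as b return (v \in codom (bnd H)) = b -> glued
   then fun h => inl (bnd G (iinv (introT idP h)))
   else fun h => inr (exist _ v (negbT h))) (erefl _).

Definition glued_adj : rel glued := fun x y =>
  [exists a : vert G, exists b : vert G,
      [&& glueG a == x, glueG b == y & adj a b]]
  || [exists u : vert H, exists v : vert H,
      [&& glueH u == x, glueH v == y & adj u v]].

Definition compatible (X : {set 'I_t}) (S : {set glued}) : bool :=
  [forall i : 'I_t,
     [forall v : vert G, adj (bnd G i) v ==> (glueG v \in S)] == (i \in X)].

Definition cntH (S : {set glued}) : nat := #|[set v : vert H | glueH v \in S]|.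

End Glue.

Definition vertex_cover (T : finType) (e : rel T) (S : {set T}) : bool :=
  [forall x, forall y, e x y ==> (x \in S) || (y \in S)].

(* The profile P^G_H(X); None stands for infinity.  When the set of candidate
   covers is non-empty, the minimum is taken with #|V(H)| as (harmless) neutral
   element since cntH S <= #|V(H)|. *)
Definition profile t (G H : bgraph t) (X : {set 'I_t}) : option nat :=
  let A := [set S : {set glued G H} |
             vertex_cover (@glued_adj t G H) S && compatible X S] in
  if A == set0 then None
  else Some (\big[minn/#|vert H|]_(S in A) cntH S).

(* c-equivalence (infinity + c = infinity) *)
Definition c_equiv t (c : nat) (H H' : bgraph t) : Prop :=
  forall G : bgraph t, strongly G -> forall X : {set 'I_t},
    profile G H X = omap (fun p => p + c) (profile G H' X).

(* Main.v *)
Require Import Defs.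
From mathcomp Require Import all_boot all_order all_algebra.
From mathcomp Require Import zify.
Import GRing.Theory Num.Theory.

Lemma bigmin_seq_le (I : eqType) (r : seq I) (F : I -> nat) m i0 :
  i0 \in r -> \big[minn/m]_(i <- r) F i <= F i0.
Proof.
elim: r => [|a r IH] //; rewrite big_cons in_cons => /orP [/eqP ->|/IH h].
  exact: geq_minl.
exact: leq_trans (geq_minr _ _) h.
Qed.

Lemma bigmin_seq_att (I : eqType) (r : seq I) (F : I -> nat) m :
  r != [::] -> (forall i, F i <= m) ->
  exists2 i, i \in r & \big[minn/m]_(i <- r) F i = F i.
Proof.
move=> + Fm; elim: r => [|a r IH] // _; rewrite big_cons.
case: r IH => [|b r] IH.
  by exists a; rewrite ?mem_head // big_nil; apply/minn_idPl/Fm.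
have [i ir ->] := IH isT.
case: (leqP (F a) (F i)) => h.
  by exists a; rewrite ?mem_head.
by exists i; rewrite // in_cons ir orbT.
Qed.

Lemma bigmin_le (I : finType) (P : pred I) (F : I -> nat) m i0 :
  P i0 -> \big[minn/m]_(i | P i) F i <= F i0.
Proof.
move=> Pi; rewrite -big_filter; apply: bigmin_seq_le.
by rewrite mem_filter Pi mem_index_enum.
Qed.

Lemma bigmin_att (I : finType) (P : pred I) (F : I -> nat) m i0 :
  P i0 -> (forall i, F i <= m) ->
  exists2 i, P i & \big[minn/m]_(i | P i) F i = F i.
Proof.
move=> Pi Fm; rewrite -big_filter.
have ne : [seq i <- index_enum I | P i] != [::].
  apply/eqP => e; have : i0 \in [seq i <- index_enum I | P i].
    by rewrite mem_filter Pi mem_index_enum.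
  by rewrite e.
have [i] := @bigmin_seq_att _ _ F m ne Fm.
by rewrite mem_filter => /andP [? _] ->; exists i.
Qed.

Section Gen.
Variables (t : nat) (G : bgraph t).

Lemma glueH_nbw (H : bgraph t) (w : {v : vert H | v \notin codom (bnd H)}) :
  @glueH t G H (val w) = inr w.
Proof.
rewrite /glueH.
have := valP w.
generalize (erefl (val w \in codom (bnd H))).
generalize (val w \in codom (bnd H)) at 2 4.
case => e; first by move=> h; exfalso; move: h; rewrite e.
by move=> _; congr inr; apply: val_inj.
Qed.

Lemma glueH_nb (H : bgraph t) v (h : v \notin codom (bnd H)) :
  @glueH t G H v = inr (exist _ v h).
Proof. exact: (glueH_nbw H (exist _ v h)). Qed.

Lemma glueH_bnd (H : bgraph t) i : @glueH t G H (bnd H i) = inl (bnd G i).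
Proof.
rewrite /glueH.
have := codom_f (bnd H) i.
generalize (erefl (bnd H i \in codom (bnd H))).
generalize (bnd H i \in codom (bnd H)) at 2 3.
case => e; last by move=> h; exfalso; move: h; rewrite e.
by move=> _; rewrite (bnd_inj (f_iinv _)).
Qed.
End Gen.

Lemma coverP {T : finType} {e : rel T} {S : {set T}} {x y} :
  vertex_cover e S -> e x y -> (x \in S) || (y \in S).
Proof. by move=> /forallP/(_ x)/forallP/(_ y)/implyP. Qed.

Section Main.
Variables (t : nat) (G : bgraph t).
Hypothesis sG : strongly G.

Definition RR (H : bgraph t) : {set glued G H} :=
  [set x | if x is inl a then a \in codom (bnd G) else true].

Definition NN (H : bgraph t) (A : {set glued G H}) : {set vert G} :=
  [set a | (a \notin codom (bnd G)) && ((inl a : glued G H) \in A)].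
Arguments NN {H}.

Lemma glueH_inj (H : bgraph t) : injective (@glueH t G H).
Proof.
move=> u v.
case: (boolP (u \in codom (bnd H))) => [/codomP [i ->] | hu];
case: (boolP (v \in codom (bnd H))) => [/codomP [j ->] | hv];
rewrite ?glueH_bnd ?glueH_nb //.
- by case => /bnd_inj ->.
all: try by [].
by move=> [].
Qed.

Lemma card_split (H : bgraph t) (A : {set glued G H}) :
  #|A| = #|NN A| + cntH A.
Proof.
rewrite -(cardsID (RR H) A) addnC; congr (_ + _).
  have inj : injective (@inl (vert G) {v : vert H | v \notin codom (bnd H)}).
    by move=> ? ? [].
  rewrite -(card_imset (NN A) inj).
  apply: eq_card => x; rewrite !inE.
  case: x => [a | w] /=; first by rewrite mem_imset // inE.
  by apply/esym/imsetP => -[b].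
rewrite /cntH -(card_imset _ (@glueH_inj H)).
apply: eq_card => x; rewrite !inE.
case: x => [a | w] /=.
- apply/idP/imsetP => [/andP [aA /codomP [i ea]] | [v]].
    by exists (bnd H i); rewrite ?inE glueH_bnd -?ea.
  rewrite inE => vA e; move: vA e.
  case: (boolP (v \in codom (bnd H))) => [/codomP [i ->] | hv];
    rewrite ?glueH_bnd ?glueH_nb // => vA [->].
  by rewrite vA codom_f.
- apply/idP/imsetP => [/andP [wA _] | [v]].
    by exists (val w); rewrite ?inE glueH_nbw.
  by rewrite inE => vA e; rewrite e vA.
Qed.

Variables (H1 H2 : bgraph t).

Definition comb (S : {set glued G H1}) (S' : {set glued G H2}) : {set glued G H2} :=
  [set x | if x is inl a then
             (if a \in codom (bnd G) then x \in S' else (inl a : glued G H1) \in S)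
           else x \in S'].

Lemma comb_glueH S S' u : (glueH G u \in comb S S') = (glueH G u \in S').
Proof.
case: (boolP (u \in codom (bnd H2))) => [/codomP [i ->] | hu].
  by rewrite glueH_bnd inE codom_f.
by rewrite glueH_nb inE.
Qed.

Lemma NN_comb S S' : NN (comb S S') = NN S.
Proof.
apply/setP => a; rewrite !inE.
by case: (boolP (a \in codom (bnd G))).
Qed.

Lemma cnt_comb S S' : cntH (comb S S') = cntH S'.
Proof. by apply: eq_card => v; rewrite [LHS]inE [RHS]inE comb_glueH. Qed.

Definition cX (S : {set glued G H1}) : {set 'I_t} :=
  [set i | [forall v, adj (bnd G i) v ==> ((inl v : glued G H1) \in S)]].

Lemma compat_cX S : compatible (cX S) S.
Proof. by apply/forallP => i; rewrite inE. Qed.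

Lemma comb_cover S S' :
  vertex_cover (@glued_adj t G H1) S ->
  vertex_cover (@glued_adj t G H2) S' -> compatible (cX S) S' ->
  vertex_cover (@glued_adj t G H2) (comb S S').
Proof.
move=> cS cS' cpS'.
have Gedge1 a b : adj a b -> @glued_adj t G H1 (inl a) (inl b).
  by move=> ab; apply/orP; left; apply/existsP; exists a; apply/existsP; exists b; rewrite !eqxx.
have Gedge2 a b : adj a b -> @glued_adj t G H2 (inl a) (inl b).
  by move=> ab; apply/orP; left; apply/existsP; exists a; apply/existsP; exists b; rewrite !eqxx.
have bcase i b : adj (bnd G i) b ->
    ((inl (bnd G i) : glued G H2) \in S') || ((inl b : glued G H1) \in S).
  move=> ab; case Sb: (_ \in S); first by rewrite orbT.
  have niX : i \notin cX S.
    by rewrite inE; apply/negP => /forallP/(_ b)/implyP/(_ ab); rewrite Sb.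
  move: cpS' => /forallP/(_ i)/eqP; rewrite (negbTE niX) => /negbT.
  rewrite negb_forall => /existsP [w]; rewrite negb_imply => /andP [aw Sw].
  have := coverP cS' (Gedge2 _ _ aw).
  by rewrite /glueG (negbTE Sw) !orbF.
apply/forallP => x; apply/forallP => y; apply/implyP => /orP
  [/existsP [a /existsP [b /and3P [/eqP <- /eqP <- ab]]]
  | /existsP [u /existsP [v /and3P [/eqP <- /eqP <- uv]]]].
  rewrite /glueG !inE.
  case: (boolP (a \in codom (bnd G))) => [/codomP [i ea] | ha];
  case: (boolP (b \in codom (bnd G))) => [/codomP [j eb] | hb].
  - by move: ab; rewrite ea eb (negbTE (sG i j)).
  - by move: ab; rewrite ea => ab; apply: bcase.
  - by rewrite orbC; move: ab; rewrite eb adj_sym => ab; apply: bcase.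
  - exact: coverP cS (Gedge1 _ _ ab).
rewrite !comb_glueH; apply: coverP cS' _.
by apply/orP; right; apply/existsP; exists u; apply/existsP; exists v; rewrite !eqxx.
Qed.
End Main.

Lemma prof_le t (G H : bgraph t) X (S : {set glued G H}) :
  vertex_cover (@glued_adj t G H) S -> compatible X S ->
  exists2 p, profile G H X = Some p & p <= cntH S.
Proof.
move=> cS cpS; rewrite /profile.
set A := [set S0 : {set glued G H} | _].
have SA : S \in A by rewrite inE cS cpS.
case: eqP => [A0 | _]; first by rewrite A0 inE in SA.
by exists (\big[minn/#|vert H|]_(S0 in A) cntH S0) => //; apply: bigmin_le.
Qed.

Lemma prof_att t (G H : bgraph t) X p :
  profile G H X = Some p ->
  exists S : {set glued G H},
    [/\ vertex_cover (@glued_adj t G H) S, compatible X S & cntH S = p].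
Proof.
rewrite /profile.
set A := [set S0 : {set glued G H} | _].
case: eqP => // /eqP A0 [<-].
have [S0 SA0] := set0Pn _ A0.
have [S SA ->] := @bigmin_att _ (fun S => S \in A) (@cntH t G H) #|vert H| S0 SA0
  (fun S => max_card _).
by exists S; move: SA; rewrite inE => /andP [].
Qed.

Theorem lemma3 (t c k : nat) (G H H' : bgraph t) :
  strongly G -> c_equiv c H H' ->
  ((exists S : {set glued G H},
       vertex_cover (@glued_adj t G H) S /\ #|S| <= k)
   <->
   (exists S : {set glued G H'},
       vertex_cover (@glued_adj t G H') S /\
       (Posz #|S| <= Posz k - Posz c)%R)).
Proof.
move=> sG ceq; split.
- move=> [S [cS Sk]].
  have [p hp pS] := prof_le t G H (cX t G H S) S cS (compat_cX t G H S).
  move: (ceq G sG (cX t G H S)); rewrite hp.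
  case hq: (profile G H' (cX t G H S)) => [q|] //= [pq].
  have [S' [cS' cpS' eS']] := prof_att t G H' _ _ hq.
  exists (comb t G H H' S S'); split; first exact: comb_cover.
  rewrite lerBrDr -PoszD lez_nat card_split NN_comb cnt_comb eS'.
  have := card_split t G H S. lia.
- move=> [S [cS Sk]]; move: Sk; rewrite lerBrDr -PoszD lez_nat => Sk.
  have [q hq qS] := prof_le t G H' (cX t G H' S) S cS (compat_cX t G H' S).
  move: (ceq G sG (cX t G H' S)); rewrite hq /= => hp.
  have [S' [cS' cpS' eS']] := prof_att t G H _ _ hp.
  exists (comb t G H' H S S'); split; first exact: comb_cover.
  rewrite card_split NN_comb cnt_comb eS'.
  have := card_split t G H' S. lia.
Qed.
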